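(* Let $T = F \cup R$ be a ground ProbLog program (with the conventions in the context) and let $(AAF^T, PS^T, \Vdash^T)$ be the PAA framework corresponding to $T$, where $AAF^T=(Args^T,Att^T)$ is finite and $PS^T=(\mathcal{W}^T,P)$. Then for every ground atom $q$: \begin{enumerate} \item $P_s(q\mid T) = Prob_G(q)$; \item $P_s(q\mid T) \le \sum_{\alpha \in Args^T,\ \alpha \text{ has claim } q} Prob_G(\alpha)$. \end{enumerate}
   Context: \textbf{Logic programs.} A (ground) logic program (LP) is a set of rules $l_0 \leftarrow l_1,\dots,l_m$ ($m\ge 0$), where $l_0$ is a ground atom (the head) and each $l_i$ ($i\ge1$) is a ground atom or a negation-as-failure literal $not\,a$ for a ground atom $a$; if $m=0$ the rule is a fact. For an LP $L$ and ground atom $q$, $L\models q$ means that $q$ is true in the (possibly three-valued) well-founded model of $L$. \textbf{ProbLog.} A ground ProbLog program is $T=F\cup R$ where $R$ is a ground LP and $F$ is a finite set of probabilistic facts $p::l\leftarrow$ with $p\in[0,1]$ and $l$ a ground atom that is not the head of any rule in $R$; each atom $l$ occurs in at most one probabilistic fact. For $F'\subseteq\{l\leftarrow \mid p::l\leftarrow\in F\}$ and $L=F'\cup R$, set $P(L\mid T)=\prod_{l\leftarrow\in F',\,p::l\leftarrow\in F} p\cdot\prod_{l\leftarrow\notin F',\,p::l\leftarrow\in F}(1-p)$. The success probability of a ground atom $q$ is $P_s(q\mid T)=\sum_{L=F'\cup R,\ F'\subseteq\{l\leftarrow\mid p::l\leftarrow\in F\},\ L\models q} P(L\mid T)$. \textbf{Abstract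 argumentation.} An AA framework is a pair $(Args,Att)$ with $Att\subseteq Args\times Args$; $G(\cdot)$ denotes its grounded extension (Dung's semantics). \textbf{ABA.} A flat ABA framework is $\langle\mathcal{L},\mathcal{R},\mathcal{A},\overline{\cdot}\rangle$ with language $\mathcal{L}$, set $\mathcal{R}$ of rules $s_0\leftarrow s_1,\dots,s_m$ ($s_i\in\mathcal{L}$), nonempty assumptions $\mathcal{A}\subseteq\mathcal{L}$ none of which is the head of a rule, and a total contrary map $\overline{\cdot}:\mathcal{A}\to\mathcal{L}$. An argument for claim $s\in\mathcal{L}$ supported by $A\subseteq\mathcal{A}$ and $\mathcal{S}\subseteq\mathcal{R}$, written $A\vdash^{\mathcal{S}} s$, is a finite tree with root labelled $s$, leaves labelled $true$ or by assumptions in $A$, each non-leaf node $s'$ having as children the body elements of one rule in $\mathcal{S}$ with head $s'$ (a single child $true$ if the body is empty), and $\mathcal{S}$ the set of rules so used. Argument $A_1\vdash^{\mathcal{S}_1}s_1$ attacks $A_2\vdash^{\mathcal{S}_2}s_2$ iff $s_1=\overline{a}$ for some $a\in A_2$. The AA framework for the ABA framework is $(Args,Att)$ with all arguments and these attacks. \textbf{ProbLog-ABA.} For $T=F\cup R$, let $HB$ be the set of ground atoms occurring in $T$, $HB^{not}=\{not\,p\mid p\in HB\}$, $\chi$ a fresh symbol, and $\mathcal{F}=\{l\mid (p::l\leftarrow)\in F\}$. The ProbLog-ABA framework corresponding to $T$ has $\mathcal{R}=R$, $\mathcal{L}=HB\cup HB^{not}\cup\{\chi\}$, $\mathcal{A}=HB^{not}\cup\mathcal{F}$,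 $\overline{not\,p}=p$, and $\overline{\phi}=\chi$ for $\phi\in\mathcal{F}$. Let $AAF^T=(Args^T,Att^T)$ be its AA framework. \textbf{PAA framework corresponding to $T$.} It is $(AAF^T,PS^T,\Vdash^T)$ where $\mathcal{W}^T=2^{\mathcal{F}}$, $P(w)=\prod_{l\in w,\,p::l\leftarrow\in F}p\cdot\prod_{l\in\mathcal{F}\setminus w,\,p::l\leftarrow\in F}(1-p)$, and for $\alpha=A\vdash^{\mathcal{S}}s\in Args^T$, $w\Vdash^T\alpha$ iff $A\cap\mathcal{F}\subseteq w$. For $w\in\mathcal{W}^T$, $AAF^T_w=(Args_w,Att_w)$ with $Args_w=\{\alpha\in Args^T\mid w\Vdash^T\alpha\}$ and $Att_w=Att^T\cap(Args_w\times Args_w)$. The grounded probability of an argument is $Prob_G(\alpha)=\sum_{w\in\mathcal{W}^T:\ \alpha\in G(AAF^T_w)}P(w)$, and the grounded probability of a ground query $q$ is $Prob_G(q)=\sum_{w\in\mathcal{W}^T:\ \exists\alpha\in G(AAF^T_w)\text{ with claim }q}P(w)$. *)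

(* Defs.v *)
From HB Require Import structures.
From mathcomp Require Import all_boot all_order all_algebra.
From mathcomp Require Import boolp.
From Stdlib Require List.
Set Implicit Arguments. Unset Strict Implicit. Unset Printing Implicit Defensive.
Import Order.TTheory GRing.Theory Num.Theory.
Local Open Scope ring_scope.

Section ProbLogABA.
Variable A : finType.  (* universe of ground atoms *)

(* body literal: an atom a, or the NAF literal  not a *)
Inductive blit := BPos of A | BNeg of A.

Record rule := Rule { rhead : A; rbody : seq blit }.

(* Least model of the Gelfond-Lifschitz reduct L^I (positive program). *)
Definition gl_closed (L : seq rule) (I X : {set A}) : bool :=
  all (fun r =>
    (all (fun b => match b with BPos a => a \in X | BNeg a => a \notin I end) (rbody r))
      ==> (rhead r \in X)) L.

Definition gl (L : seq rule) (I : {set A}) : {set A} :=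
  \bigcap_(X : {set A} | gl_closed L I X) X.

(* Atoms true in the well-founded model (alternating fixpoint:
   least fixpoint of the monotone operator gl L \o gl L). *)
Definition wf_true (L : seq rule) : {set A} :=
  \bigcap_(X : {set A} | gl L (gl L X) \subset X) X.

Definition wf_models (L : seq rule) (q : A) : bool := q \in wf_true L.

(* A ground ProbLog program T = F u R is given by the rules Rr, the set Fs of
   atoms that carry a probabilistic fact, and p l the probability of the fact
   p::l <- for l \in Fs (each atom occurs in at most one fact). *)
Variable R : realFieldType.
Variable Rr : seq rule.
Variable Fs : {set A}.
Variable p : A -> R.

Definition Pw (w : {set A}) : R :=
  (\prod_(l in w) p l) * \prod_(l in Fs :\: w) (1 - p l).

Definition prog_of (w : {set A}) : seq rule :=
  [seq Rule l [::] | l <- enum w] ++ Rr.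

Definition succ_prob (q : A) : R :=
  \sum_(w : {set A} | (w \subset Fs) && wf_models (prog_of w) q) Pw w.

(* language: atoms, NAF literals, chi, plus the auxiliary leaf label true *)
Inductive lit := LAtom of A | LNot of A | LChi | LTrue.

Definition blit_lit (b : blit) : lit :=
  match b with BPos a => LAtom a | BNeg a => LNot a end.

Definition blit_atom (b : blit) : A := match b with BPos a => a | BNeg a => a end.

Definition HB : {set A} :=
  [set a | (a \in Fs) ||
     has (fun r => (rhead r == a) || has (fun b => blit_atom b == a) (rbody r)) Rr].

Definition isAssm (l : lit) : Prop :=
  match l with
  | LNot a => a \in HB
  | LAtom a => a \in Fs
  | _ => False
  end.

Definition contrary (l : lit) : lit :=
  match l with
  | LNot a => LAtom a
  | _ => LChi
  end.

Inductive tree := Tnode of lit & seq tree.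

Definition label (t : tree) : lit := let: Tnode l _ := t in l.

Fixpoint leaves (t : tree) : seq lit :=
  match t with
  | Tnode l ch => if ch is [::] then [:: l] else flatten (map leaves ch)
  end.

Fixpoint valid (t : tree) : Prop :=
  match t with
  | Tnode l ch =>
      (ch = [::] /\ (l = LTrue \/ isAssm l))
      \/ (exists r, List.In r Rr /\ l = LAtom (rhead r) /\
            map label ch = (if rbody r is [::] then [:: LTrue]
                            else map blit_lit (rbody r)) /\
            (fix allv (s : seq tree) : Prop :=
               match s with [::] => True | c :: s' => valid c /\ allv s' end) ch)
  end.

Definition isArg (t : tree) : Prop := valid t /\ label t <> LTrue.

Definition inSupport (a : lit) (t : tree) : Prop := List.In a (leaves t) /\ isAssm a.

Definition attacks (t1 t2 : tree) : Prop :=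
  exists a, inSupport a t2 /\ label t1 = contrary a.

Section Grounded.
Variable X : Type.
Variables (Args : X -> Prop) (Att : X -> X -> Prop).

Definition defended (S : X -> Prop) (a : X) : Prop :=
  Args a /\ forall b, Args b -> Att b a -> exists c, Args c /\ S c /\ Att c b.

(* grounded extension = least fixed point of the characteristic function *)
Definition grounded (a : X) : Prop :=
  forall S : X -> Prop, (forall x, defended S x -> S x) -> S a.
End Grounded.

Definition holds_in (w : {set A}) (t : tree) : Prop :=
  forall l, inSupport (LAtom l) t -> l \in w.

Definition Args_w (w : {set A}) (t : tree) : Prop := isArg t /\ holds_in w t.
Definition Att_w (w : {set A}) (t1 t2 : tree) : Prop :=
  attacks t1 t2 /\ Args_w w t1 /\ Args_w w t2.

Definition in_G (w : {set A}) (t : tree) : Prop := grounded (Args_w w) (Att_w w) t.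

Definition probG_arg (t : tree) : R :=
  \sum_(w : {set A} | (w \subset Fs) && `[< in_G w t >]) Pw w.

Definition probG_query (q : A) : R :=
  \sum_(w : {set A} | (w \subset Fs) && `[< exists t, in_G w t /\ label t = LAtom q >]) Pw w.

Definition has_claim (q : A) (t : tree) : bool :=
  if label t is LAtom a then a == q else false.

End ProbLogABA.

(* Main.v *)
Require Import Defs.
From HB Require Import structures.
From mathcomp Require Import all_boot all_order all_algebra.
From mathcomp Require Import boolp.
From Stdlib Require List.
From Stdlib Require Import Classical_Prop.
Set Implicit Arguments. Unset Strict Implicit.
Import Order.TTheory GRing.Theory Num.Theory.
Local Open Scope ring_scope.

Section Aux.
Variable A : finType.
Variable Rr : seq (rule A).
Variable Fs : {set A}.

Fixpoint tree_ind2 (P : tree A -> Prop)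
  (H : forall l ch, (forall c, List.In c ch -> P c) -> P (Tnode l ch)) (t : tree A) : P t :=
  match t with
  | Tnode l ch => H l ch
      ((fix go (s : seq (tree A)) : forall c, List.In c s -> P c :=
          match s with
          | [::] => fun c (hc : List.In c [::]) => False_ind _ hc
          | x :: s' => fun c hc =>
              match hc with
              | or_introl e => @eq_ind (tree A) x P (@tree_ind2 P H x) c e
              | or_intror h => go s' c h
              end
          end) ch)
  end.

Lemma allv_iff (s : seq (tree A)) :
  (fix allv (s : seq (tree A)) : Prop :=
     match s with [::] => True | c :: s' => valid Rr Fs c /\ allv s' end) s
  <-> (forall c, List.In c s -> valid Rr Fs c).
Proof.
elim: s => [|x s IH] /=; first by split.
split.
- by move=> [Hx Hs] c [<-|Hc] //; apply IH.
- move=> H; split; first by apply H; left.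
  by apply IH => c Hc; apply H; right.
Qed.

Lemma valid_eq l ch : valid Rr Fs (Tnode l ch) <->
  (ch = [::] /\ (l = LTrue A \/ isAssm Rr Fs l))
  \/ (exists r, List.In r Rr /\ l = LAtom (rhead r) /\
        map (@label A) ch = (if rbody r is [::] then [:: LTrue A]
                        else map (@blit_lit A) (rbody r)) /\
        (forall c, List.In c ch -> valid Rr Fs c)).
Proof.
simpl; split.
- case=> [H|[r [H1 [H2 [H3 H4]]]]]; [by left|right; exists r; do 3!split=>//].
  by apply/allv_iff.
- case=> [H|[r [H1 [H2 [H3 H4]]]]]; [by left|right; exists r; do 3!split=>//].
  by apply/allv_iff.
Qed.

Lemma leaves_eq l ch : leaves (Tnode l ch) =
  if ch is [::] then [:: l] else flatten (map (@leaves A) ch).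
Proof. by []. Qed.

Lemma in_flatten_leaves x ch :
  List.In x (flatten (map (@leaves A) ch)) -> exists c, List.In c ch /\ List.In x (leaves c).
Proof.
elim: ch => [|c ch IH] //= /List.in_app_iff [H|H].
- by exists c; split=> //; left.
- by case: (IH H) => c' [H1 H2]; exists c'; split=> //; right.
Qed.

Lemma flatten_leaves_in x c ch :
  List.In c ch -> List.In x (leaves c) -> List.In x (flatten (map (@leaves A) ch)).
Proof.
elim: ch => [|c' ch IH] //= [<-|H] Hx; apply/List.in_app_iff; first by left.
by right; apply IH.
Qed.

Lemma valid_leaves t : valid Rr Fs t ->
  forall x, List.In x (leaves t) -> x = LTrue A \/ isAssm Rr Fs x.
Proof.
elim/tree_ind2: t => l ch IH /valid_eq [[-> H]|[r [_ [_ [Hm Hv]]]]] x.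
- by rewrite leaves_eq => -[<-|//].
- rewrite leaves_eq; case: ch IH Hm Hv => [|c ch] IH Hm Hv.
    by case: (rbody r) Hm.
  move/in_flatten_leaves=> [c' [H1 H2]].
  by apply: (IH c') => //; apply Hv.
Qed.

Lemma valid_notchi t : valid Rr Fs t -> label t <> LChi A.
Proof.
case: t => l ch /valid_eq [[_ [->|H]]|[r [_ [-> _]]]] //= E.
by move: H; rewrite E.
Qed.

Lemma all_In (T : Type) (f : pred T) s x : all f s -> List.In x s -> f x.
Proof. by elim: s => [|y s IH] //= /andP [H1 H2] [<-|H]; [|apply IH]. Qed.

Lemma In_all (T : Type) (f : pred T) s : (forall x, List.In x s -> f x) -> all f s.
Proof.
elim: s => [|y s IH] //= H; apply/andP; split; first by apply H; left.
by apply IH => x Hx; apply H; right.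
Qed.


Lemma map_In (T U V : Type) (f : T -> V) (g : U -> V) s1 s2 y :
  map f s1 = map g s2 -> List.In y s2 -> exists x, List.In x s1 /\ f x = g y.
Proof.
elim: s1 s2 => [|x s1 IH] [|y' s2] //= [E1 E2] [<-|H].
- by exists x; split=> //; left.
- by case: (IH _ E2 H) => x' [H1 H2]; exists x'; split=> //; right.
Qed.


Variable w : {set A}.
Hypothesis Hw : w \subset Fs.

Definition lsat (I X : {set A}) (l : lit A) : bool :=
  match l with LAtom a => a \in X | LNot b => b \notin I | _ => true end.

Definition bsat (I X : {set A}) (b : blit A) : bool :=
  match b with BPos a => a \in X | BNeg a => a \notin I end.

Lemma closed_Rr I X r : gl_closed (prog_of Rr w) I X -> List.In r Rr ->
  all (bsat I X) (rbody r) -> rhead r \in X.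
Proof.
rewrite /gl_closed /prog_of all_cat => /andP [_ H] Hr Hb.
have := all_In H Hr => /= /implyP; apply.
by apply: sub_all Hb => -[a|a].
Qed.

Lemma closed_fact I X l : gl_closed (prog_of Rr w) I X -> l \in w -> l \in X.
Proof.
rewrite /gl_closed /prog_of all_cat all_map => /andP [/allP H _] Hl.
by have := H l; rewrite mem_enum => /(_ Hl) /=.
Qed.

Lemma tree_gl_gen I X t : valid Rr Fs t ->
  (forall l, List.In l (leaves t) -> lsat I w l) ->
  gl_closed (prog_of Rr w) I X -> lsat I X (label t).
Proof.
move=> + + HX; elim/tree_ind2: t => l ch IH /valid_eq
   [[-> _]|[r [Hr [-> [Hm Hv]]]]] Hl.
- have := Hl l; rewrite leaves_eq => /(_ (or_introl erefl)).
  by case: l {Hl} => //= a; apply: closed_fact HX.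
- apply: (closed_Rr HX Hr); apply: In_all => b Hb.
  have [c [Hc Hlc]] : exists c, List.In c ch /\ label c = blit_lit b.
    case: (rbody r) Hm Hb => [|b0 bs] Hm Hb; first by case: Hb.
    exact: (map_In Hm Hb).
  have Hsub : forall x, List.In x (leaves c) ->
      List.In x (leaves (Tnode (LAtom (rhead r)) ch)).
    move=> x Hx; rewrite leaves_eq.
    have Hf := flatten_leaves_in Hc Hx.
    by case: (ch) Hf.
  have := IH c Hc (Hv c Hc) (fun l' Hl' => Hl l' (Hsub l' Hl')).
  by rewrite Hlc; case: b {Hb Hlc}.
Qed.

Lemma In_has (T : Type) (f : pred T) s x : List.In x s -> f x -> has f s.
Proof. by elim: s => [|y s IH] //= [<-|H] Hf; apply/orP; [left|right; apply IH]. Qed.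

Definition good (I : {set A}) (t : tree A) : Prop :=
  valid Rr Fs t /\ holds_in Rr Fs w t /\ (forall b, List.In (LNot b) (leaves t) -> b \notin I).

Lemma tree_gl I t a : good I t -> label t = LAtom a ->
  a \in gl (prog_of Rr w) I.
Proof.
move=> [Hv [Hh Hn]] Hlab; apply/bigcapP => X HX.
have := tree_gl_gen Hv _ HX; rewrite Hlab; apply.
move=> l Hl; case: l Hl => [a' Hl|b Hl|//|//] /=; last exact: Hn.
apply: Hh; split=> //.
by case: (valid_leaves Hv Hl).
Qed.

Lemma children I Y r bs :
  List.In r Rr -> (forall b, List.In b bs -> List.In b (rbody r)) ->
  (forall b, List.In b bs -> bsat I Y b) ->
  (forall a, a \in Y -> exists t, good I t /\ label t = LAtom a) ->
  exists ch, map (@label A) ch = map (@blit_lit A) bs /\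
    (forall c, List.In c ch -> good I c).
Proof.
move=> Hr; elim: bs => [|b bs IH] Hsub Hs HY; first by exists [::].
case: IH.
- by move=> b' Hb'; apply Hsub; right.
- by move=> b' Hb'; apply Hs; right.
- exact: HY.
move=> ch [Hm Hg].
have Hb := Hs b (or_introl erefl).
have [c [Hc Hlc]] : exists c, good I c /\ label c = blit_lit b.
  case: b Hb Hsub Hs => a /= Hb Hsub Hs; first exact: HY.
  exists (Tnode (LNot a) [::]); split=> //; split; last split.
  - apply/valid_eq; left; split=> //; right => /=.
    rewrite inE; apply/orP; right.
    apply: (In_has Hr); apply/orP; right.
    by apply: (In_has (Hsub _ (or_introl erefl))) => /=.
  - by move=> l [[E|[]] _].
  - by move=> b' [[<-]|[]].
exists (c :: ch); split; first by rewrite /= Hlc Hm.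
by move=> c' [<-|H]; [|apply Hg].
Qed.

Lemma gl_tree I a : a \in gl (prog_of Rr w) I ->
  exists t, good I t /\ label t = LAtom a.
Proof.
pose Y := [set a | `[< exists t, good I t /\ label t = LAtom a >]].
have HY : forall a, a \in Y -> exists t, good I t /\ label t = LAtom a.
  by move=> a'; rewrite inE => /asboolP.
suff HC : gl_closed (prog_of Rr w) I Y.
  by move/bigcapP => /(_ Y HC); apply: HY.
rewrite /gl_closed /prog_of all_cat all_map; apply/andP; split.
- apply/allP => l; rewrite mem_enum => Hl /=.
  rewrite inE; apply/asboolP.
  exists (Tnode (LAtom l) [::]); split=> //; split; last split.
  + by apply/valid_eq; left; split=> //; right => /=; apply: (subsetP Hw).
  + by move=> l' [[[<-]|[]] _].
  + by move=> b' [|[]].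
- apply: In_all => r Hr; apply/implyP => Hb.
  have [ch [Hm Hg]] := children (bs := rbody r) Hr (fun b H => H)
     (fun b H => all_In Hb H) HY.
  rewrite inE; apply/asboolP.
  pose ch' := if rbody r is [::] then [:: Tnode (LTrue A) [::]] else ch.
  have Hg' : forall c, List.In c ch' -> good I c.
    rewrite /ch'; case E: (rbody r) => [|b0 bs]; last exact: Hg.
    move=> c [<-|[]]; split; first by apply/valid_eq; left; split=> //; left.
    by split; [move=> l [[E1|[]] _]|move=> b' [E1|[]]].
  have Hm' : map (@label A) ch' = if rbody r is [::] then [:: LTrue A]
              else map (@blit_lit A) (rbody r).
    by rewrite /ch'; case: (rbody r) Hm.
  have Hne : ch' <> [::].
    by rewrite /ch'; case: (rbody r) Hm => [|b0 bs] Hm0 // Hc; rewrite Hc in Hm0.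
  exists (Tnode (LAtom (rhead r)) ch'); split=> //; split; last split.
  + apply/valid_eq; right; exists r; do 3!split=> //.
    by move=> c Hc; case: (Hg' c Hc).
  + move=> l [Hl Ha]; move: Hl; rewrite leaves_eq.
    case E: ch' Hne => [//|c0 chr] _; rewrite -E.
    move/in_flatten_leaves => [c [Hc Hl]].
    by case: (Hg' c Hc) => _ [Hh _]; apply: Hh.
  + move=> b; rewrite leaves_eq.
    case E: ch' Hne => [//|c0 chr] _; rewrite -E.
    move/in_flatten_leaves => [c [Hc Hl]].
    by case: (Hg' c Hc) => _ [_ Hn]; apply: Hn.
Qed.

End Aux.



Lemma grounded_args (X : Type) (Ar : X -> Prop) Att a : grounded Ar Att a -> Ar a.
Proof. by apply; move=> x []. Qed.

Lemma grounded_fix (X : Type) (Ar : X -> Prop) Att x :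
  defended Ar Att (grounded Ar Att) x -> grounded Ar Att x.
Proof.
move=> [Hx Hd] S HS; apply: (HS); split=> // b Hb Hab.
case: (Hd b Hb Hab) => c [Hc [Gc Hcb]]; exists c; split=> //; split=> //.
exact: Gc S HS.
Qed.

Section Main.
Variable A : finType.
Variable Rr : seq (rule A).
Variable Fs : {set A}.
Variable w : {set A}.
Hypothesis Hw : w \subset Fs.

Local Notation P := (prog_of Rr w).
Local Notation W := (wf_true (prog_of Rr w)).

Lemma gl_anti (I J : {set A}) : I \subset J -> gl P J \subset gl P I.
Proof.
move=> HIJ; apply/subsetP => a /(gl_tree Hw) [t [[Hv [Hh Hn]] Hl]].
apply: (tree_gl (Fs := Fs) (t := t)); last by []; split=> //; split=> // b Hb.
apply/negP => HbI; have := Hn b Hb; by rewrite (subsetP HIJ b HbI).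
Qed.

Lemma wf_least (X : {set A}) : gl P (gl P X) \subset X -> W \subset X.
Proof. by move=> HX; apply/subsetP => a /bigcapP; apply. Qed.

Lemma wf_post : gl P (gl P W) \subset W.
Proof.
apply/subsetP => a Ha; apply/bigcapP => X HX.
have HWX := wf_least HX.
apply: (subsetP HX); apply: (subsetP (gl_anti (gl_anti HWX))).
exact: Ha.
Qed.

Lemma att_inv t1 t2 : Att_w Rr Fs w t1 t2 ->
  exists b, label t1 = LAtom b /\ List.In (LNot b) (leaves t2).
Proof.
move=> [[a [[Hin Ha] Hl]] [[[Hv1 _] _] _]].
case: a Hin Ha Hl => //= [l|b] Hin Ha Hl.
- by case: (valid_notchi Hv1).
- by exists b.
Qed.

Lemma att_mk t1 t2 b : Args_w Rr Fs w t1 -> Args_w Rr Fs w t2 ->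
  label t1 = LAtom b -> List.In (LNot b) (leaves t2) -> Att_w Rr Fs w t1 t2.
Proof.
move=> H1 H2 Hl Hin; split; last by split.
exists (LNot b); split=> //; split=> //.
by case: H2 => [[Hv _] _]; case: (valid_leaves Hv Hin).
Qed.

Lemma good_args I t b : good Rr Fs w I t -> label t = LAtom b -> Args_w Rr Fs w t.
Proof. by move=> [Hv [Hh _]] Hl; split=> //; split=> //; rewrite Hl. Qed.

Lemma claimA t q : in_G Rr Fs w t -> label t = LAtom q -> q \in W.
Proof.
move=> HG Hlab.
pose U := gl P W.
pose S := fun x => Args_w Rr Fs w x /\
   forall b, List.In (LNot b) (leaves x) -> b \notin U.
have HS : forall x, defended (Args_w Rr Fs w) (Att_w Rr Fs w) S x -> S x.
  move=> x [Hx Hd]; split=> // b Hb; apply/negP => HbU.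
  have [t' [Hg' Hl']] := gl_tree Hw HbU.
  have Ha' := good_args Hg' Hl'.
  have [c [Hc [[_ Sc] Hcb]]] := Hd t' Ha' (att_mk Ha' Hx Hl' Hb).
  have [d [Hld Hind]] := att_inv Hcb.
  case: Hg' => _ [_ Hn'].
  have := Hn' d Hind; apply/negP/negPn.
  apply: (subsetP wf_post).
  case: Hc => [[Hvc _] Hhc].
  by apply: (tree_gl (Fs := Fs) (t := c)); last by [];  split=> //; split.
have [[[Hv _] Hh] Hn] := HG S HS.
apply: (subsetP wf_post); apply: (tree_gl (Fs := Fs) (t := t)); last by [].
by split=> //; split.
Qed.

Lemma claimB q : q \in W -> exists t, in_G Rr Fs w t /\ label t = LAtom q.
Proof.
pose X := [set a | `[< exists t, in_G Rr Fs w t /\ label t = LAtom a >]].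
suff HX : gl P (gl P X) \subset X.
  by move=> /(subsetP (wf_least HX)); rewrite inE => /asboolP.
apply/subsetP => a /(gl_tree Hw) [t [Hg Hl]].
rewrite inE; apply/asboolP; exists t; split=> //.
apply: grounded_fix; split; first exact: good_args Hg Hl.
move=> b' Hb' Hatt.
have [d [Hld Hin]] := att_inv Hatt.
case: Hg => _ [_ Hn].
have Hd := Hn d Hin.
case: (classic (exists c, List.In (LNot c) (leaves b') /\ c \in X)).
- move=> [c [Hc Hcx]]; move: Hcx; rewrite inE => /asboolP [t'' [HG'' Hl'']].
  have Ha'' := grounded_args HG''.
  exists t''; split=> //; split=> //.
  by apply: att_mk Ha'' Hb' Hl'' Hc.
- move=> Hne; exfalso; move/negP: Hd; apply.
  case: Hb' => [[Hv _] Hh].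
  apply: (tree_gl (Fs := Fs) (t := b')); last by [];  split=> //; split=> // c Hc.
  by apply/negP => Hcx; apply: Hne; exists c.
Qed.

End Main.

Unset Implicit Arguments. Set Strict Implicit.


Lemma sum_In (R : realFieldType) (T : Type) (s : seq T) x (Pr : pred T) (F : T -> R) :
  List.In x s -> Pr x -> (forall y, Pr y -> 0 <= F y) ->
  F x <= \sum_(y <- s | Pr y) F y.
Proof.
elim: s => [|y s IH] //= [<-|H] Hx Hpos; rewrite big_cons.
- rewrite Hx lerDl; exact: sumr_ge0.
- case: ifP => Hy; last exact: IH.
  by rewrite -[F x]add0r lerD //; [apply: Hpos|apply: IH].
Qed.

Theorem mainTheorem1 (R : realFieldType) (A : finType)
  (Rr : seq (rule A)) (Fs : {set A}) (p : A -> R)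
  (Hp : forall l, l \in Fs -> 0 <= p l <= 1)
  (Hhead : forall r, List.In r Rr -> rhead r \notin Fs)
  (args : seq (tree A)) (Hnodup : List.NoDup args)
  (Hargs : forall t, isArg Rr Fs t <-> List.In t args)
  (q : A) :
  succ_prob Rr Fs p q = probG_query Rr Fs p q /\
  succ_prob Rr Fs p q <= \sum_(t <- args | has_claim q t) probG_arg Rr Fs p t.
Proof.
have E1 : succ_prob Rr Fs p q = probG_query Rr Fs p q.
  rewrite /succ_prob /probG_query; apply: eq_bigl => w.
  case Hw: (w \subset Fs) => //=.
  apply/idP/asboolP.
  - exact: claimB.
  - by move=> [t [HG Hl]]; apply: claimA HG Hl.
split=> //; rewrite E1 /probG_query /probG_arg.
have Hpos : forall w : {set A}, w \subset Fs -> 0 <= Pw Fs p w.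
  move=> w Hw; rewrite /Pw; apply: mulr_ge0; apply: prodr_ge0 => l Hl.
  - by case/andP: (Hp l (subsetP Hw l Hl)).
  - move: Hl; rewrite inE => /andP [_ HlF].
    by case/andP: (Hp l HlF) => _; rewrite subr_ge0.
rewrite [X in _ <= X](_ : _ = \sum_(t <- args | has_claim q t) \sum_(w : {set A})
   (if (w \subset Fs) && `[< in_G Rr Fs w t >] then Pw Fs p w else 0)); last first.
  by apply: eq_bigr => t _; rewrite big_mkcond.
rewrite exchange_big /= big_mkcond /=; apply: ler_sum => w _.
case: ifP => [/andP [Hw /asboolP [t [HG Hl]]]|_].
- have Hin : List.In t args by apply/Hargs; case: (grounded_args HG).
  have := @sum_In R _ args t (has_claim q) (fun t => if (w \subset Fs) && `[< in_G Rr Fs w t >] then Pw Fs p w else 0) Hin.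
  have Ht : `[< in_G Rr Fs w t >] by apply/asboolP.
  rewrite Hw Ht /=; apply.
  + by rewrite /has_claim Hl.
  + by move=> y _; case: ifP => // /andP [Hw1 _]; apply: Hpos.
- apply: sumr_ge0 => t _; case: ifP => // /andP [Hw _]; exact: Hpos.
Qed.
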